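(* Let $T$ be a tree, $\tau\in V(T)$ a terminal vertex with unique edge $\{\tau,\alpha\}\in E(T)$, and $T_\tau$ the tree obtained by deleting $\tau$ and the edge $\{\tau,\alpha\}$. Then there is a canonical homeomorphism $$\mathsf L_T\simeq\big(\mathsf L_{T_\tau}\times\mathbb R^{\{\tau\}}\big)\coprod_{\mathsf L_{T_\tau}(\alpha)\times\{0\}}\big(\mathsf L_{T_\tau}(\alpha)\times\mathbb R^{\{\alpha\}}_{\le0}\big),$$ where $\mathsf L_{T_\tau}(\alpha)\times\{0\}$ is the boundary of $\mathsf L_{T_\tau}(\alpha)\times\mathbb R^{\{\alpha\}}_{\le0}$ and is identified with $\mathsf L_{T_\tau}(\alpha)\times\{0\}\subset\mathsf L_{T_\tau}(\alpha)\times\mathbb R^{\{\tau\}}\subset\mathsf L_{T_\tau}\times\mathbb R^{\{\tau\}}$.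
   Context: A tree is a nonempty finite connected acyclic graph with vertex set $V(T)$ and edge set $E(T)$ (two-element subsets of $V(T)$). A terminal vertex is a vertex contained in exactly one edge. Arboreal singularity: for $\alpha\in V(T)$ let $\mathsf L_T(\alpha)=\mathbb R^{V(T)\setminus\{\alpha\}}$ with coordinates $x_\gamma(\alpha)$; $\mathsf L_T$ is the quotient of $\coprod_\alpha\mathsf L_T(\alpha)$ by the equivalence relation generated by identifying, for each edge $\{\alpha,\beta\}$, $\{x_\gamma(\alpha)\}\sim\{x_\gamma(\beta)\}$ whenever $x_\beta(\alpha)=x_\alpha(\beta)\ge0$ and $x_\gamma(\alpha)=x_\gamma(\beta)$ for $\gamma\ne\alpha,\beta$; each $\mathsf L_T(\alpha)$ is regarded as a subspace of $\mathsf L_T$. $\mathbb R^{\{v\}}$ denotes a copy of $\mathbb R$ indexed by the vertex $v$ (coordinate $x_v$). *)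

(* Defs.v *)
From Stdlib Require Import Relations.
From HB Require Import structures.
From mathcomp Require Import all_boot all_order all_algebra.
From mathcomp Require Import all_classical all_reals all_analysis.


Import Order.TTheory GRing.Theory Num.Theory numFieldNormedType.Exports.
Local Open Scope ring_scope.
Local Open Scope classical_set_scope.
Local Open Scope quotient_scope.

Definition gen_rel {D : Type} (r : D -> D -> Prop) : rel D :=
  fun x y => `[< clos_refl_sym_trans D r x y >].

Lemma gen_rel_equiv {D : Type} (r : D -> D -> Prop) :
  equiv_class_of (gen_rel r).
Proof.
split.
- by move=> x; apply/asboolP; apply: rst_refl.
- move=> x y; apply/asboolP/asboolP; exact: rst_sym.
- move=> y x z /asboolP Hxy /asboolP Hyz; apply/asboolP; exact: rst_trans Hxy Hyz.
Qed.

Definition gen_equiv {D : Type} (r : D -> D -> Prop) : equiv_rel D :=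
  EquivRelPack (gen_rel_equiv r).

Definition quot_space (D : topologicalType) (r : D -> D -> Prop) :=
  quotient_topology {eq_quot (gen_equiv r)}.

Definition is_homeomorphism (X Y : topologicalType) (f : X -> Y) : Prop :=
  exists g : Y -> X, [/\ cancel f g, cancel g f, continuous f & continuous g].

(* Trees: finite vertex type V, edges = two-element subsets {x,y},     *)
(* encoded by a symmetric irreflexive relation e.                      *)

Definition is_tree (V : finType) (e : rel V) : Prop :=
  [/\ symmetric e, irreflexive e, (0 < #|V|)%N,
      (forall x y : V, connect e x y) &
      (forall s : seq V, uniq s -> (2 < size s)%N -> ~~ cycle e s)].

Definition del_vert (V : finType) (tau : V) : finType := {v : V | v != tau}.
Definition del_edge (V : finType) (e : rel V) (tau : V) : rel (del_vert V tau) :=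
  fun x y => e (val x) (val y).

Definition coord (V : finType) (a : V) : Type := {g : V | g != a}.

(* L_T(a) = R^{V(T) \ {a}} (product topology = euclidean topology) *)
Definition Lpiece (R : realType) (V : finType) (a : V) : topologicalType :=
  {ptws coord V a -> R}.

Definition LpieceF (R : realType) (V : finType) : V -> topologicalType :=
  fun a => Lpiece R V a.

Definition Lpre (R : realType) (V : finType) : topologicalType :=
  {a : V & LpieceF R V a}.

(* coordinate x_g(a) of x in L_T(a), for g != a (value 0 at g = a is
   never used) *)
Definition coordval (R : realType) (V : finType) (a : V) (x : Lpiece R V a)
  (g : V) : R := if @insub V (fun g => g != a) (coord V a) g is Some h
                 then x h else 0.

Definition arb_step (R : realType) (V : finType) (e : rel V) (p q : Lpre R V)
  : Prop :=
  let a := projT1 p in let b := projT1 q in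
  [/\ e a b,
      coordval R V a (projT2 p) b = coordval R V b (projT2 q) a,
      0 <= coordval R V a (projT2 p) b &
      forall g : V, g != a -> g != b ->
        coordval R V a (projT2 p) g = coordval R V b (projT2 q) g].

Definition arboreal (R : realType) (V : finType) (e : rel V) :=
  quot_space (Lpre R V) (arb_step R V e).

Definition nonpos (R : realType) : topologicalType := set_type [set x : R | x <= 0].

Definition PO_left (R : realType) (V : finType) (e : rel V) (tau : V)
  : topologicalType := (arboreal R (del_vert V tau) (del_edge V e tau) * R)%type.

Definition PO_right (R : realType) (V : finType) (tau : V)
  (alpha : del_vert V tau) : topologicalType :=
  (Lpiece R (del_vert V tau) alpha * nonpos R)%type.

Definition PO_F (R : realType) (V : finType) (e : rel V) (tau : V)
  (alpha : del_vert V tau) : bool -> topologicalType :=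
  fun b => if b then PO_left R V e tau else PO_right R V tau alpha.

Definition PO_pre (R : realType) (V : finType) (e : rel V) (tau : V)
  (alpha : del_vert V tau) : topologicalType := {b : bool & PO_F R V e tau alpha b}.

Definition po_step (R : realType) (V : finType) (e : rel V) (tau : V)
  (alpha : del_vert V tau) (p q : PO_pre R V e tau alpha) : Prop :=
  exists (z : Lpiece R (del_vert V tau) alpha) (w : nonpos R),
    [/\ val w = 0,
        p = existT (PO_F R V e tau alpha) false (z, w) &
        q = existT (PO_F R V e tau alpha) true
              (\pi_(arboreal R (del_vert V tau) (del_edge V e tau))
                 (existT (LpieceF R (del_vert V tau)) alpha z), 0)].

Definition pushout (R : realType) (V : finType) (e : rel V) (tau : V)
  (alpha : del_vert V tau) := quot_space (PO_pre R V e tau alpha) (po_step R V e tau alpha).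

Definition restr (R : realType) (V : finType) (tau : V) (b : del_vert V tau)
  (X : V -> R) : Lpiece R (del_vert V tau) b :=
  fun g : coord (del_vert V tau) b => X (val (val g)).

Lemma nonpos_min (R : realType) (r : R) : (Num.min r 0) \in [set x : R | x <= 0].
Proof. by rewrite inE /= ge_min lexx orbT. Qed.

Definition to_nonpos (R : realType) (r : R) : nonpos R :=
  exist _ (Num.min r 0) (nonpos_min R r).

Definition canon_map (R : realType) (V : finType) (e : rel V) (tau : V)
  (alpha : del_vert V tau) (p : Lpre R V) : PO_pre R V e tau alpha :=
  let X := coordval R V (projT1 p) (projT2 p) in
  match @insub V (fun v => v != tau) (del_vert V tau) (projT1 p) with
  | Some b => existT (PO_F R V e tau alpha) true
      (\pi_(arboreal R (del_vert V tau) (del_edge V e tau)) (existT (LpieceF R (del_vert V tau)) b (restr R V tau b X)),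
       X tau)
  | None =>
      if 0 <= X (val alpha) then
        existT (PO_F R V e tau alpha) true
          (\pi_(arboreal R (del_vert V tau) (del_edge V e tau)) (existT (LpieceF R (del_vert V tau)) alpha (restr R V tau alpha X)),
           X (val alpha))
      else existT (PO_F R V e tau alpha) false (restr R V tau alpha X, to_nonpos R (X (val alpha)))
  end.

(* Main.v *)
Require Import Defs.
From Stdlib Require Import Relations.
From HB Require Import structures.
From mathcomp Require Import all_boot all_order all_algebra.
From mathcomp Require Import all_classical all_reals all_analysis.
From mathcomp Require Import lra.
Import Order.TTheory GRing.Theory Num.Theory numFieldNormedType.Exports.
Local Open Scope ring_scope.
Local Open Scope classical_set_scope.
Local Open Scope quotient_scope.

Lemma ptws_continuous (I : Type) (Y : topologicalType) (R : realType)
  (f : Y -> {ptws I -> R}) :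
  (forall i, continuous (fun y => f y i)) -> continuous f.
Proof.
move=> H y; apply/cvg_sup; first try typeclasses eauto.
move=> i A /= [B [[C oC <-] Cfy] CA].
apply: (@filterS _ _ _ (@^~ i @^-1` C)) => //; last first.
  have : nbhs (f y i) C by apply: open_nbhs_nbhs.
  by move=> /(H i y).
Qed.

Lemma tube (D : topologicalType) (R : realType) (O : set (D * R)) (K : set R)
  (x : D) : open O -> compact K -> (forall t, K t -> O (x, t)) ->
  \forall x' \near x, forall t, K t -> O (x', t).
Proof.
move=> oO /compact_near_coveringP cK Hx.
have := cK D (nbhs x) (fun i t => O (i, t)) _.
apply.
move=> t Kt.
have : nbhs (x, t) O by apply: open_nbhs_nbhs; split => //; exact: Hx.
case=> -[A B] /= [nA nB] AB.
exists (B, A) => //= -[t' i] /= [Bt Ai].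
exact: (AB (i, t')).
Qed.

Lemma quot_prod_continuous (D : topologicalType) (r : D -> D -> Prop)
  (R : realType) (Z : topologicalType) (f : (quot_space D r * R)%type -> Z) :
  continuous (fun p : D * R => f (\pi_(quot_space D r) p.1, p.2)) ->
  continuous f.
Proof.
move=> Hc; apply/continuousP => W oW.
rewrite openE => -[u0 t0] /= Wf.
have Hx0 : \pi_(quot_space D r) (repr u0) = u0 by rewrite reprK.
pose O := (fun p : D * R => f (\pi_(quot_space D r) p.1, p.2)) @^-1` W.
have oO : open O by move/continuousP : Hc; apply.
have : nbhs (repr u0, t0) O by apply: open_nbhs_nbhs; split => //; rewrite /O /= Hx0.
case=> -[A B] /= [nA /nbhs_ballP [eps /= eps0 epsB]] AB.
pose K := `[t0 - eps / 2, t0 + eps / 2]%classic.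
have KB : K `<=` B.
  move=> t; rewrite /K /= in_itv /= => /andP [h1 h2]; apply: epsB.
  rewrite /ball /= ltr_norml; apply/andP; split; lra.
pose Aq := [set u : quot_space D r | forall t, K t -> W (f (u, t))].
have oAq : open Aq.
  rewrite /open /= /quotient_open openE => x /= Hx.
  rewrite /interior.
  have := @tube D R O K x oO (@segment_compact R (t0 - eps / 2) (t0 + eps / 2)).
  move=> /(_ Hx).
  by apply: filterS => y Hy t Kt; exact: Hy.
have Aqu0 : Aq u0.
  move=> t Kt; rewrite -Hx0.
  exact: (AB (repr u0, t)) (conj (nbhs_singleton nA) (KB t Kt)).
exists (Aq, ball t0 (eps / 2)) => /=.
  split; first exact: (@open_nbhs_nbhs (quot_space D r) u0 Aq (conj oAq Aqu0)).
  by apply: (@nbhsx_ballx R R); lra.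
case=> u t /= [Aqu bt]; apply: Aqu.
move: bt; rewrite /ball /= ltr_norml /K /= in_itv /= => /andP [h1 h2].
apply/andP; split; lra.
Qed.

Lemma gen_rel_resp (D : Type) (r : D -> D -> Prop) (Z : Type) (f : D -> Z) :
  (forall x y, r x y -> f x = f y) ->
  forall x y, clos_refl_sym_trans D r x y -> f x = f y.
Proof.
move=> Hf x y; elim=> [a b /Hf //|//|a b _ -> //|a b c _ -> _ -> //].
Qed.

Lemma qlift_pi (D : topologicalType) (r : D -> D -> Prop) (Z : Type) (f : D -> Z) :
  (forall x y, r x y -> f x = f y) ->
  forall x, f (repr (\pi_(quot_space D r) x)) = f x.
Proof.
move=> Hf x.
have : \pi_{eq_quot (gen_equiv r)} (repr (\pi_(quot_space D r) x)) =
       \pi_{eq_quot (gen_equiv r)} x by rewrite reprK.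
move=> /eqquotP /asboolP; exact: gen_rel_resp.
Qed.

Lemma pi_eq_step (D : topologicalType) (r : D -> D -> Prop) x y :
  r x y -> \pi_(quot_space D r) x = \pi_(quot_space D r) y.
Proof.
move=> rxy; apply/eqquotP/asboolP; exact: rst_step.
Qed.

Definition mkp (R : realType) (V : finType) (a : V) (X : V -> R) : Lpiece R V a :=
  fun g => X (val g).

Definition Yl (R : realType) (V : finType) (tau : V) (b : del_vert V tau)
  (y : Lpiece R (del_vert V tau) b) (t : R) : V -> R :=
  fun g => if @insub V (fun v => v != tau) (del_vert V tau) g is Some g'
           then coordval R (del_vert V tau) b y g' else t.

Definition Yr (R : realType) (V : finType) (tau : V) (alpha : del_vert V tau)
  (z : Lpiece R (del_vert V tau) alpha) (w : R) : V -> R :=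
  fun g => if g == val alpha then w else Yl R V tau alpha z 0 g.

Definition Gl0 (R : realType) (V : finType) (e : rel V) (tau : V) (t : R)
  (q : Lpre R (del_vert V tau)) : arboreal R V e :=
  \pi_(arboreal R V e) (existT (LpieceF R V) (val (projT1 q))
     (mkp R V (val (projT1 q)) (Yl R V tau (projT1 q) (projT2 q) t))).

Definition Gr (R : realType) (V : finType) (e : rel V) (tau : V)
  (alpha : del_vert V tau) (p : PO_right R V tau alpha) : arboreal R V e :=
  \pi_(arboreal R V e) (existT (LpieceF R V) tau
     (mkp R V tau (Yr R V tau alpha p.1 (val p.2)))).

Definition Gl (R : realType) (V : finType) (e : rel V) (tau : V)
  (p : PO_left R V e tau) : arboreal R V e := Gl0 R V e tau p.2 (repr p.1).

Definition Gmap (R : realType) (V : finType) (e : rel V) (tau : V)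
  (alpha : del_vert V tau) (s : PO_pre R V e tau alpha) : arboreal R V e :=
  let: existT b p := s in
  (match b return PO_F R V e tau alpha b -> arboreal R V e with
   | true => fun p => Gl R V e tau p
   | false => fun p => Gr R V e tau alpha p end) p.

Definition hmap (R : realType) (V : finType) (e : rel V) (tau : V)
  (alpha : del_vert V tau) (u : arboreal R V e) : pushout R V e tau alpha :=
  \pi_(pushout R V e tau alpha) (canon_map R V e tau alpha (repr u)).

Definition gmap (R : realType) (V : finType) (e : rel V) (tau : V)
  (alpha : del_vert V tau) (v : pushout R V e tau alpha) : arboreal R V e :=
  Gmap R V e tau alpha (repr v).

Lemma coordvalE (R : realType) (V : finType) (a : V) (x : Lpiece R V a)
  (g : Defs.coord V a) : coordval R V a x (val g) = x g.
Proof.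
rewrite /coordval; case: insubP => [u _ /val_inj -> //|].
by rewrite (valP g).
Qed.

Lemma coordvalE' (R : realType) (V : finType) (a : V) (x : Lpiece R V a)
  (g : V) (H : g != a) : coordval R V a x g = x (exist _ g H).
Proof. exact: (coordvalE _ _ _ x (exist _ g H)). Qed.

Lemma coordval_mkp (R : realType) (V : finType) (a : V) (X : V -> R) (g : V) :
  g != a -> coordval R V a (mkp R V a X) g = X g.
Proof. by move=> H; rewrite (coordvalE' _ _ _ _ _ H). Qed.

Lemma insub_tau (V : finType) (tau : V) :
  @insub V (fun v => v != tau) (del_vert V tau) tau = None.
Proof. by rewrite insubF // eqxx. Qed.

Lemma insub_val (V : finType) (tau : V) (b : del_vert V tau) :
  @insub V (fun v => v != tau) (del_vert V tau) (val b) = Some b.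
Proof. by rewrite valK. Qed.

Lemma Yl_tau (R : realType) (V : finType) (tau : V) b y t :
  Yl R V tau b y t tau = t.
Proof. by rewrite /Yl insub_tau. Qed.

Lemma Yl_val (R : realType) (V : finType) (tau : V) b y t (g : del_vert V tau) :
  Yl R V tau b y t (val g) = coordval R (del_vert V tau) b y g.
Proof. by rewrite /Yl insub_val. Qed.

Lemma Gl0_resp (R : realType) (V : finType) (e : rel V) (tau : V) (t : R) :
  irreflexive e ->
  forall p q, arb_step R (del_vert V tau) (del_edge V e tau) p q ->
    Gl0 R V e tau t p = Gl0 R V e tau t q.
Proof.
move=> irr [a y] [b z]; rewrite /arb_step /= => -[eab e1 e2 e3].
rewrite /Gl0 /=; apply: pi_eq_step; rewrite /arb_step /=.
have hab : val b != val a.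
  apply/negP => /eqP hba; move: eab; rewrite /del_edge hba.
  by rewrite irr.
have hba : val a != val b by rewrite eq_sym.
rewrite !coordval_mkp // !Yl_val; split => //.
move=> g ga gb; rewrite !coordval_mkp //.
case: (eqVneq g tau) => [->|gt]; first by rewrite !Yl_tau.
have -> : g = val (exist (fun v => v != tau) g gt : del_vert V tau) by [].
rewrite !Yl_val; apply: e3.
  by apply: contra ga => /eqP <-.
by apply: contra gb => /eqP <-.
Qed.

Lemma Gl_pi (R : realType) (V : finType) (e : rel V) (tau : V) :
  irreflexive e -> forall q t,
  Gl R V e tau (\pi_(arboreal R (del_vert V tau) (del_edge V e tau)) q, t)
  = Gl0 R V e tau t q.
Proof.
move=> irr q t; rewrite /Gl /=.
exact: (qlift_pi _ _ _ _ (Gl0_resp R V e tau t irr)).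
Qed.

Lemma lp_ext (R : realType) (V : finType) (a : V) (x y : Lpiece R V a) :
  (forall g, x g = y g) -> x = y.
Proof. exact: functional_extensionality_dep. Qed.

Lemma coordval_restr (R : realType) (V : finType) (tau : V)
  (b w : del_vert V tau) (X : V -> R) :
  w != b -> coordval R (del_vert V tau) b (restr R V tau b X) w = X (val w).
Proof. by move=> H; rewrite (coordvalE' _ _ _ _ _ H). Qed.

Lemma arb_step_sym (R : realType) (V : finType) (e : rel V) :
  symmetric e -> forall p q, arb_step R V e p q -> arb_step R V e q p.
Proof.
move=> sym [a x] [b y]; rewrite /arb_step /= => -[eab e1 e2 e3].
split.
- by rewrite sym.
- by rewrite e1.
- by rewrite -e1.
- by move=> g gb ga; rewrite e3.
Qed.

Lemma canon_resp1 (R : realType) (V : finType) (e : rel V) (tau : V)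
  (alpha : del_vert V tau) :
  irreflexive e -> (forall b : V, e tau b -> b = val alpha) ->
  forall p q, arb_step R V e p q -> projT1 q != tau ->
  \pi_(pushout R V e tau alpha) (canon_map R V e tau alpha p)
  = \pi_(pushout R V e tau alpha) (canon_map R V e tau alpha q).
Proof.
move=> irr uniq [a x] [b y]; rewrite /arb_step /= => -[eab e1 e2 e3] hb.
rewrite /canon_map /=.
case: insubP => [a' _ ha|/negPn/eqP ha];
  (case: insubP => [b' _ hb'|/negP nb]; last by case: (nb hb)); subst b.
  subst a.
  congr (\pi_(pushout R V e tau alpha) (existT _ true (_, _))).
    apply: pi_eq_step; rewrite /arb_step /=.
    have hab : b' != a'.
      by apply/negP => /eqP hba; move: eab; rewrite hba irr.
    have hba : a' != b' by rewrite eq_sym.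
    rewrite !coordval_restr //; split => //.
    move=> g ga gb; rewrite !coordval_restr //; apply: e3.
      by apply: contra ga => /eqP /val_inj ->.
    by apply: contra gb => /eqP /val_inj ->.
  by apply: (e3 tau); rewrite eq_sym; [exact: (valP a')|exact: (valP b')].
subst a.
have hb' : b' = alpha by apply: val_inj; exact: uniq.
subst b'.
rewrite e2.
congr (\pi_(pushout R V e tau alpha) (existT _ true (
          \pi_(arboreal R (del_vert V tau) (del_edge V e tau)) (existT _ alpha _), _))) => //.
apply: lp_ext => g; rewrite /restr; apply: e3.
  exact: (valP (val g)).
by apply: contra (valP g) => /eqP /val_inj ->.
Qed.

Lemma canon_resp (R : realType) (V : finType) (e : rel V) (tau : V)
  (alpha : del_vert V tau) :
  symmetric e -> irreflexive e -> (forall b : V, e tau b -> b = val alpha) ->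
  forall p q, arb_step R V e p q ->
  \pi_(pushout R V e tau alpha) (canon_map R V e tau alpha p)
  = \pi_(pushout R V e tau alpha) (canon_map R V e tau alpha q).
Proof.
move=> sym irr uniq p q st.
case: (eqVneq (projT1 q) tau) => hq; last exact: canon_resp1.
have st' := arb_step_sym R V e sym p q st.
have hp : projT1 p != tau.
  apply/negP => /eqP hp; case: st => + _ _ _.
  by rewrite hp hq irr.
by symmetry; apply: canon_resp1.
Qed.

Lemma hmap_pi (R : realType) (V : finType) (e : rel V) (tau : V)
  (alpha : del_vert V tau) :
  symmetric e -> irreflexive e -> (forall b : V, e tau b -> b = val alpha) ->
  forall p, hmap R V e tau alpha (\pi_(arboreal R V e) p)
  = \pi_(pushout R V e tau alpha) (canon_map R V e tau alpha p).
Proof.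
move=> sym irr uniq p; rewrite /hmap.
exact: (qlift_pi _ _ _ (fun p => \pi_(pushout R V e tau alpha) (canon_map R V e tau alpha p))
  (canon_resp R V e tau alpha sym irr uniq)).
Qed.

Lemma Gmap_resp (R : realType) (V : finType) (e : rel V) (tau : V)
  (alpha : del_vert V tau) :
  irreflexive e -> e tau (val alpha) ->
  forall s s', po_step R V e tau alpha s s' ->
  Gmap R V e tau alpha s = Gmap R V e tau alpha s'.
Proof.
move=> irr eta s s' [z [w [w0 -> ->]]] /=.
rewrite Gl_pi //; rewrite /Gr /Gl0 /=; apply: pi_eq_step; rewrite /arb_step /=.
have h1 : val alpha != tau by exact: (valP alpha).
have h2 : tau != val alpha by rewrite eq_sym.
rewrite !coordval_mkp // Yl_tau /Yr eqxx w0; split => //.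
move=> g gt ga; rewrite !coordval_mkp //.
by rewrite /Yr (negbTE ga).
Qed.

Lemma gmap_pi (R : realType) (V : finType) (e : rel V) (tau : V)
  (alpha : del_vert V tau) :
  irreflexive e -> e tau (val alpha) ->
  forall s, gmap R V e tau alpha (\pi_(pushout R V e tau alpha) s)
  = Gmap R V e tau alpha s.
Proof.
move=> irr eta s; rewrite /gmap.
exact: (qlift_pi _ _ _ _ (Gmap_resp R V e tau alpha irr eta)).
Qed.

Lemma Gmap_canon (R : realType) (V : finType) (e : rel V) (tau : V)
  (alpha : del_vert V tau) :
  irreflexive e -> e tau (val alpha) ->
  forall p, Gmap R V e tau alpha (canon_map R V e tau alpha p)
  = \pi_(arboreal R V e) p.
Proof.
move=> irr eta [a x]; rewrite /canon_map /=.
case: insubP => [a' _ ha|/negPn/eqP ha]; subst a.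
  rewrite /= Gl_pi // /Gl0 /=.
  congr (\pi_(arboreal R V e) (existT _ _ _)).
  apply: lp_ext => g; rewrite /mkp.
  rewrite -(coordvalE _ _ _ x g).
  case: (eqVneq (val g) tau) => [->|gt]; first by rewrite Yl_tau.
  have -> : val g = val (exist (fun v => v != tau) (val g) gt : del_vert V tau) by [].
  rewrite Yl_val coordval_restr //.
  have gv : val g != val a' := valP g.
  by apply: contra gv => /eqP hg; apply/eqP; exact: (congr1 val hg).
have h1 : val alpha != tau by exact: (valP alpha).
have h2 : tau != val alpha by rewrite eq_sym.
case: ifP => h0.
  rewrite /= Gl_pi // /Gl0 /=; symmetry; apply: pi_eq_step.
  rewrite /arb_step /= !coordval_mkp // Yl_tau; split => //.
  move=> g gt ga; rewrite !coordval_mkp //.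
  have ga' : (exist (fun v => v != tau) g gt : del_vert V tau) != alpha.
    by apply: contra ga => /eqP <-.
  have -> : g = val (exist (fun v => v != tau) g gt : del_vert V tau) by [].
  by rewrite Yl_val coordval_restr.
rewrite /= /Gr /=.
congr (\pi_(arboreal R V e) (existT _ _ _)).
apply: lp_ext => g; rewrite /mkp /Yr /=.
rewrite -(coordvalE _ _ _ x g).
case: (eqVneq (val g) (val alpha)) => [->|ga].
  by rewrite min_l //; apply: ltW; rewrite ltNge h0.
have -> : val g = val (exist (fun v => v != tau) (val g) (valP g) : del_vert V tau) by [].
rewrite Yl_val coordval_restr //.
Qed.

Lemma hmap_Gmap (R : realType) (V : finType) (e : rel V) (tau : V)
  (alpha : del_vert V tau) :
  symmetric e -> irreflexive e -> (forall b : V, e tau b -> b = val alpha) ->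
  e tau (val alpha) ->
  forall s, hmap R V e tau alpha (Gmap R V e tau alpha s)
  = \pi_(pushout R V e tau alpha) s.
Proof.
move=> sym irr uniq eta [[] [u t]] /=.
  rewrite /Gl /= /Gl0.
  case E: (repr u) => [b y] /=.
  have Hu : \pi_(arboreal R (del_vert V tau) (del_edge V e tau)) (existT _ b y) = u.
    by rewrite -E reprK.
  rewrite hmap_pi // /canon_map /= insub_val /=.
  have htb : tau != val b by rewrite eq_sym; exact: (valP b).
  rewrite coordval_mkp // Yl_tau.
  congr (\pi_(pushout R V e tau alpha) (existT _ true (_, t))).
  rewrite -Hu; congr (\pi_(arboreal R (del_vert V tau) (del_edge V e tau)) (existT _ b _)).
  apply: lp_ext => g; rewrite /restr.
  have hg : val (val g) != val b.
    have gv : val g != b := valP g.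
    by apply: contra gv => /eqP /val_inj ->.
  by rewrite coordval_mkp // Yl_val coordvalE.
rewrite /Gr hmap_pi // /canon_map /= insub_tau /=.
have h1 : val alpha != tau by exact: (valP alpha).
have hX : coordval R V tau (mkp R V tau (Yr R V tau alpha u (val t))) (val alpha) = val t.
  by rewrite coordval_mkp // /Yr eqxx.
have hr : restr R V tau alpha (coordval R V tau (mkp R V tau (Yr R V tau alpha u (val t)))) = u.
  apply: lp_ext => g; rewrite /restr.
  have hg : val (val g) != val alpha.
    have gv : val g != alpha := valP g.
    by apply: contra gv => /eqP /val_inj ->.
  have hg' : val (val g) != tau := valP (val g).
  by rewrite coordval_mkp // /Yr (negbTE hg) Yl_val coordvalE.
rewrite hX hr.
have tle : val t <= 0 by move: (valP t); rewrite inE.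
case: ifP => h0.
  have t0 : val t = 0 by apply/eqP; rewrite eq_le tle h0.
  symmetry; apply: pi_eq_step; exists u, t; split => //.
  by rewrite t0.
congr (\pi_(pushout R V e tau alpha) (existT _ false (u, _))).
by apply: val_inj; rewrite /= min_l.
Qed.

Lemma pair_cont (X Y Z : topologicalType) (f : X -> Y) (g : X -> Z) :
  continuous f -> continuous g -> continuous (fun x => (f x, g x)).
Proof. by move=> cf cg x; apply: cvg_pair; [exact: cf|exact: cg]. Qed.

Lemma comp_cont (X Y Z : topologicalType) (f : X -> Y) (g : Y -> Z) :
  continuous f -> continuous g -> continuous (fun x => g (f x)).
Proof. by move=> cf cg x; exact: (continuous_comp (cf x) (cg (f x))). Qed.

Arguments comp_cont {X Y Z f g}.
Arguments pair_cont {X Y Z f g}.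

Lemma coordval_cont (R : realType) (V : finType) (a g : V) :
  continuous (fun x : Lpiece R V a => coordval R V a x g).
Proof.
rewrite /coordval; case: insub => [h|]; last exact: cst_continuous.
exact: (@proj_continuous _ (fun _ : Defs.coord V a => (R : topologicalType)) h).
Qed.

Lemma sigT_cont (I : choiceType) (X : I -> topologicalType) (Z : topologicalType)
  (f : {i & X i} -> Z) :
  (forall i, continuous (fun x => f (existT X i x))) -> continuous f.
Proof. by move=> H [i x]; exact: H. Qed.

Lemma sigT_prod_cont (I : choiceType) (X : I -> topologicalType)
  (Y Z : topologicalType) (f : ({i & X i} * Y)%type -> Z) :
  (forall i, continuous (fun p : (X i * Y)%type => f (existT X i p.1, p.2))) ->
  continuous f.
Proof.
move=> H [[i x] y] U /= nU.
have := H i (x, y) U nU.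
case=> -[A B] /= [nA nB] AB.
exists (existT X i @` A, B) => /=; first by split => //; exact: existT_nbhs.
by move=> [q t] /= [[x' Ax' <-] Bt]; exact: (AB (x', t)).
Qed.

Lemma paste (Y Z : topologicalType) (R : realType) (c : Y -> R)
  (F1 F2 : Y -> Z) : continuous c -> continuous F1 -> continuous F2 ->
  (forall y, c y = 0 -> F1 y = F2 y) ->
  continuous (fun y => if 0 <= c y then F1 y else F2 y).
Proof.
move=> cc c1 c2 agree y U /= nU; rewrite nbhs_filterE /=.
case: (ltgtP (c y) 0) => hc.
- move: nU; rewrite leNgt hc /= => nU.
  have n1 : nbhs y (c @^-1` [set r | r < 0]).
    by apply: cc; apply: open_nbhs_nbhs; split => //; exact: open_lt.
  have n2 : nbhs y (F2 @^-1` U) := c2 y U nU.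
  apply: filter_app n2; apply: filterS n1 => z /= hz h.
  by rewrite leNgt hz.
- move: nU; rewrite (ltW hc) /= => nU.
  have n1 : nbhs y (c @^-1` [set r | r > 0]).
    by apply: cc; apply: open_nbhs_nbhs; split => //; exact: open_gt.
  have n2 : nbhs y (F1 @^-1` U) := c1 y U nU.
  apply: filter_app n2; apply: filterS n1 => z /= hz h.
  by rewrite (ltW hz).
- move: nU; rewrite hc lexx => nU.
  have nU' : nbhs (F2 y) U by rewrite -agree.
  have n1 : nbhs y (F1 @^-1` U) := c1 y U nU.
  have n2 : nbhs y (F2 @^-1` U) := c2 y U nU'.
  apply: filter_app n2; apply: filterS n1 => z /= h1 h2.
  by case: ifP.
Qed.

Lemma to_nonpos_cont (R : realType) : continuous (to_nonpos R).
Proof.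
move=> r A /= [B [[C oC <-] Cr] CA].
apply: (@filterS _ _ _ ((fun s : R => Num.min s 0) @^-1` C)) => //.
  by move=> s /= Cs; apply: CA.
have cm : continuous (fun s : R => Num.min s 0).
  apply: (@comp_cont _ _ _ (fun s : R => (s, (0 : R))) (fun xy : R * R => Num.min xy.1 xy.2)).
    by apply: pair_cont => ?; [exact: cvg_id|exact: cvg_cst].
  exact: min_continuous.
apply: cm; apply: open_nbhs_nbhs; split => //.
Qed.

Lemma restr_cont (R : realType) (V : finType) (tau : V) (a : V)
  (b : del_vert V tau) :
  continuous (fun x : Lpiece R V a => restr R V tau b (coordval R V a x)).
Proof. by apply: ptws_continuous => g; exact: coordval_cont. Qed.

Lemma H_cont (R : realType) (V : finType) (e : rel V) (tau : V)
  (alpha : del_vert V tau) :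
  continuous (fun p : Lpre R V =>
    \pi_(pushout R V e tau alpha) (canon_map R V e tau alpha p)).
Proof.
have pc : continuous (\pi_(pushout R V e tau alpha)) := pi_continuous.
have pcW : continuous (\pi_(arboreal R (del_vert V tau) (del_edge V e tau))) :=
  pi_continuous.
apply: sigT_cont => a.
rewrite /canon_map /=.
case: insubP => [b _ hb|/negPn/eqP ha]; subst a.
  apply: (comp_cont _ pc).
  apply: (comp_cont _ (@existT_continuous bool (PO_F R V e tau alpha) true)).
  apply: pair_cont; last exact: coordval_cont.
  apply: (comp_cont _ pcW).
  apply: (comp_cont _ (@existT_continuous _ (LpieceF R (del_vert V tau)) b)).
  exact: restr_cont.
set c := (fun x : Lpiece R V tau => coordval R V tau x (val alpha)).
set F1 := (fun x : Lpiece R V tau => \pi_(pushout R V e tau alpha)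
   (existT (PO_F R V e tau alpha) true
      (\pi_(arboreal R (del_vert V tau) (del_edge V e tau))
         (existT (LpieceF R (del_vert V tau)) alpha
            (restr R V tau alpha (coordval R V tau x))), c x))).
set F2 := (fun x : Lpiece R V tau => \pi_(pushout R V e tau alpha)
   (existT (PO_F R V e tau alpha) false
      (restr R V tau alpha (coordval R V tau x), to_nonpos R (c x)))).
have -> : (fun x : Lpiece R V tau => \pi_(pushout R V e tau alpha)
      (if 0 <= c x
       then existT (PO_F R V e tau alpha) true
          (\pi_(arboreal R (del_vert V tau) (del_edge V e tau))
             (existT (LpieceF R (del_vert V tau)) alpha
                (restr R V tau alpha (coordval R V tau x))), c x)
       else existT (PO_F R V e tau alpha) false
          (restr R V tau alpha (coordval R V tau x), to_nonpos R (c x))))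
   = (fun x => if 0 <= c x then F1 x else F2 x).
  by apply: funext => x; case: ifP.
have cc : continuous c by exact: coordval_cont.
apply: paste => //.
- apply: (comp_cont _ pc).
  apply: (comp_cont _ (@existT_continuous bool (PO_F R V e tau alpha) true)).
  apply: pair_cont => //.
  apply: (comp_cont _ pcW).
  apply: (comp_cont _ (@existT_continuous _ (LpieceF R (del_vert V tau)) alpha)).
  exact: restr_cont.
- apply: (comp_cont _ pc).
  apply: (comp_cont _ (@existT_continuous bool (PO_F R V e tau alpha) false)).
  apply: pair_cont; first exact: restr_cont.
  exact: (comp_cont cc (to_nonpos_cont R)).
- move=> x hx; rewrite /F1 /F2; symmetry; apply: pi_eq_step.
  exists (restr R V tau alpha (coordval R V tau x)), (to_nonpos R (c x)).
  split => //; first by rewrite /= hx minxx.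
  by rewrite hx.
Qed.

Lemma fst_cont (X Y : topologicalType) : continuous (fun p : X * Y => p.1).
Proof. by move=> p; exact: cvg_fst. Qed.

Lemma snd_cont (X Y : topologicalType) : continuous (fun p : X * Y => p.2).
Proof. by move=> p; exact: cvg_snd. Qed.

Lemma Gr_cont (R : realType) (V : finType) (e : rel V) (tau : V)
  (alpha : del_vert V tau) : continuous (Gr R V e tau alpha).
Proof.
have pc : continuous (\pi_(arboreal R V e)) := pi_continuous.
rewrite /Gr; apply: (comp_cont _ pc).
apply: (comp_cont _ (@existT_continuous _ (LpieceF R V) tau)).
apply: ptws_continuous => g; rewrite /mkp /Yr.
case: eqP => _.
  apply: (comp_cont (snd_cont _ _)).
  exact: (@initial_continuous _ R (@set_val R [set x : R | x <= 0])).
rewrite /Yl; case: insub => [g'|]; last exact: cst_continuous.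
exact: (comp_cont (fst_cont _ _) (coordval_cont _ _ _ _)).
Qed.

Lemma Gl_cont (R : realType) (V : finType) (e : rel V) (tau : V) :
  irreflexive e -> continuous (Gl R V e tau).
Proof.
move=> irr.
apply: quot_prod_continuous.
have -> : (fun p : (Lpre R (del_vert V tau) * R)%type =>
   Gl R V e tau (\pi_(quot_space (Lpre R (del_vert V tau))
      (arb_step R (del_vert V tau) (del_edge V e tau))) p.1, p.2))
  = (fun p => Gl0 R V e tau p.2 p.1).
  by apply: funext => p; exact: Gl_pi.
apply: sigT_prod_cont => b /=.
have pc : continuous (\pi_(arboreal R V e)) := pi_continuous.
rewrite /Gl0 /=; apply: (comp_cont _ pc).
apply: (comp_cont _ (@existT_continuous _ (LpieceF R V) (val b))).
apply: ptws_continuous => g; rewrite /mkp /Yl.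
case: insub => [g'|]; last exact: snd_cont.
exact: (comp_cont (fst_cont _ _) (coordval_cont _ _ _ _)).
Qed.

Lemma Gmap_cont (R : realType) (V : finType) (e : rel V) (tau : V)
  (alpha : del_vert V tau) :
  irreflexive e -> continuous (Gmap R V e tau alpha).
Proof.
move=> irr; apply: sigT_cont => -[] /=.
  exact: Gl_cont.
exact: Gr_cont.
Qed.

Theorem lemma2p7 (R : realType) (V : finType) (e : rel V) (tau : V)
    (alpha : del_vert V tau) :
  is_tree V e ->
  e tau (val alpha) ->
  (forall b : V, e tau b -> b = val alpha) ->
  exists h : arboreal R V e -> pushout R V e tau alpha,
    is_homeomorphism (arboreal R V e) (pushout R V e tau alpha) h /\
    (forall p : Lpre R V,
       h (\pi_(arboreal R V e) p)
       = \pi_(pushout R V e tau alpha) (canon_map R V e tau alpha p)).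
Proof.
case=> sym irr _ _ _ eta uniq.
exists (hmap R V e tau alpha); split; last exact: hmap_pi.
exists (gmap R V e tau alpha); split.
- move=> u; rewrite -(reprK u) hmap_pi // gmap_pi //; exact: Gmap_canon.
- move=> v; rewrite -(reprK v) gmap_pi //; exact: hmap_Gmap.
- apply/quotient_continuous.
  have -> : hmap R V e tau alpha \o \pi_(arboreal R V e)
    = (fun p => \pi_(pushout R V e tau alpha) (canon_map R V e tau alpha p)).
    by apply: funext => p; exact: hmap_pi.
  exact: H_cont.
- apply/quotient_continuous.
  have -> : gmap R V e tau alpha \o \pi_(pushout R V e tau alpha)
    = Gmap R V e tau alpha.
    by apply: funext => s; exact: gmap_pi.
  exact: Gmap_cont.
Qed.
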